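(* Let $v_1\ge v_2>0$, $m\in\mathbb{Z}_{\ge1}$ and $0<b<m$. If a strategy profile $(X,Y)$ with $\mathbf{E}(X)=m$ and $\mathbf{E}(Y)=b$ is a Nash equilibrium of the discrete all-pay auction with valuations $v_1,v_2$, then $m=v_2/2$, $(X,Y)$ is a Nash equilibrium of the General Lotto game $\Gamma(m,b)$, and $X=U_{\mathrm{O}}^m$.
   Context: Discrete all-pay auction: two players, 1 and 2, value a prize at $v_1$ and $v_2$ respectively, where $v_1\ge v_2>0$. A (mixed) strategy is a probability distribution on $\mathbb{Z}_{\ge 0}$ with finite mean, identified with a $\mathbb{Z}_{\ge0}$-valued random variable; the two players' choices are independent. If player 1 uses $X$ and player 2 uses $Y$, the expected payoffs are $P^1(X,Y)=v_1\Pr(X>Y)+\frac{v_1}{2}\Pr(X=Y)-\mathbf{E}(X)$ and $P^2(Y,X)=v_2\Pr(Y>X)+\frac{v_2}{2}\Pr(X=Y)-\mathbf{E}(Y)$. A Nash equilibrium of the all-pay auction is a pair $(X,Y)$ with $P^1(X,Y)\ge P^1(X',Y)$ and $P^2(Y,X)\ge P^2(Y',X)$ for all strategies $X',Y'$. Discrete General Lotto game: for reals $a,b\ge 0$, in $\Gamma(a,b)$ player 1 chooses a distribution $X$ on $\mathbb{Z}_{\ge0}$ with $\mathbf{E}(X)=a$ and player 2 chooses a distribution $Y$ on $\mathbb{Z}_{\ge 0}$ with $\mathbf{E}(Y)=b$ (independently); the payoff to player 1 is $H(X,Y)=\Pr(X>Y)-\Pr(X<Y)$ and to player 2 is $H(Y,X)=-H(X,Y)$.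 A Nash equilibrium of $\Gamma(a,b)$ is a pair $(X,Y)$ from these strategy sets such that neither player can increase her payoff by switching to another strategy in her own strategy set. For $m\ge1$, $U_{\mathrm{O}}^m$ is the uniform distribution on $\{1,3,\dots,2m-1\}$. *)

(* Defs.v *)
From Stdlib Require Import Reals Arith.
From Coquelicot Require Import Coquelicot.
Open Scope R_scope.

Definition is_strategy (p : nat -> R) : Prop :=
  (forall n, 0 <= p n) /\ is_series p 1 /\ ex_series (fun n => INR n * p n).

Definition mean (p : nat -> R) : R := Series (fun n => INR n * p n).

(* Pr(X > Y) for independent X ~ p, Y ~ q *)
Definition Pr_gt (p q : nat -> R) : R :=
  Series (fun i => p i * Series (fun j => if (j <? i)%nat then q j else 0)).

(* Pr(X = Y) for independent X ~ p, Y ~ q *)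
Definition Pr_eq (p q : nat -> R) : R := Series (fun i => p i * q i).

Definition P1 (v1 : R) (p q : nat -> R) : R :=
  v1 * Pr_gt p q + v1 / 2 * Pr_eq p q - mean p.
Definition P2 (v2 : R) (q p : nat -> R) : R :=
  v2 * Pr_gt q p + v2 / 2 * Pr_eq p q - mean q.

Definition allpay_NE (v1 v2 : R) (p q : nat -> R) : Prop :=
  is_strategy p /\ is_strategy q /\
  (forall p', is_strategy p' -> P1 v1 p' q <= P1 v1 p q) /\
  (forall q', is_strategy q' -> P2 v2 q' p <= P2 v2 q p).

Definition H (p q : nat -> R) : R := Pr_gt p q - Pr_gt q p.

Definition lotto_strategy (a : R) (p : nat -> R) : Prop :=
  is_strategy p /\ mean p = a.

Definition lotto_NE (a b : R) (p q : nat -> R) : Prop :=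
  lotto_strategy a p /\ lotto_strategy b q /\
  (forall p', lotto_strategy a p' -> H p' q <= H p q) /\
  (forall q', lotto_strategy b q' -> H q' p <= H q p).

(* U_O^m : uniform on {1,3,...,2m-1} *)
Definition uniform_odd (m : nat) (n : nat) : R :=
  if (Nat.odd n && (n <? 2 * m)%nat)%bool then / INR m else 0.

(* Main.v *)
Require Import Defs.
From Stdlib Require Import Reals Lra Lia FunctionalExtensionality.
From Coquelicot Require Import Coquelicot.
Open Scope R_scope.

Fixpoint Ssum (f : nat -> R) (n : nat) : R :=
  match n with O => 0 | S k => Ssum f k + f k end.

Lemma sum_n_Ssum (a : nat -> R) n : sum_n a n = Ssum a (S n).
Proof.
  induction n. rewrite sum_O; simpl; lra.
  rewrite sum_Sn, IHn. simpl. unfold plus; simpl. lra.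
Qed.

Lemma series_Ssum (a : nat -> R) (l:R) : is_series a l -> is_lim_seq (Ssum a) l.
Proof.
  intro H. apply is_lim_seq_incr_1.
  eapply is_lim_seq_ext; [|apply H]. intro n; simpl. apply sum_n_Ssum.
Qed.

Lemma Ssum_series (a : nat -> R) (l:R) : is_lim_seq (Ssum a) l -> is_series a l.
Proof.
  intro H. apply is_lim_seq_incr_1 in H.
  assert (H2 : is_lim_seq (sum_n a) l).
  { eapply is_lim_seq_ext; [|apply H]. intro n; simpl. symmetry; apply sum_n_Ssum. }
  exact H2.
Qed.

Lemma lim_uniq (u : nat -> R) (l1 l2:R) : is_lim_seq u l1 -> is_lim_seq u l2 -> l1 = l2.
Proof.
  intros H1 H2. apply is_lim_seq_unique in H1. apply is_lim_seq_unique in H2.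
  rewrite H1 in H2. now injection H2.
Qed.

Lemma ex_Ssum (a : nat -> R) : ex_series a -> is_lim_seq (Ssum a) (Series a).
Proof. intro H. apply series_Ssum, Series_correct, H. Qed.

Lemma Ssum_ext f g n : (forall i, f i = g i) -> Ssum f n = Ssum g n.
Proof. intro H; induction n; simpl; auto. rewrite IHn, H; auto. Qed.

Lemma Ssum_le f g n : (forall i, f i <= g i) -> Ssum f n <= Ssum g n.
Proof. intro H; induction n; simpl. lra. specialize (H n). lra. Qed.

Lemma Ssum_plus f g n : Ssum (fun i => f i + g i) n = Ssum f n + Ssum g n.
Proof. induction n; simpl; lra. Qed.

Lemma Ssum_scal c f n : Ssum (fun i => c * f i) n = c * Ssum f n.
Proof. induction n; simpl. lra. rewrite IHn; lra. Qed.

Lemma Ssum_nonneg f n : (forall i, 0 <= f i) -> 0 <= Ssum f n.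
Proof. intro H; induction n; simpl. lra. specialize (H n); lra. Qed.

Lemma Ssum_mono f n k : (forall i, 0 <= f i) -> Ssum f n <= Ssum f (n + k).
Proof.
  intro H; induction k. rewrite Nat.add_0_r; lra.
  rewrite Nat.add_succ_r; simpl. specialize (H (n+k)%nat); lra.
Qed.

Lemma Ssum_le_lim f (l:R) n : (forall i, 0 <= f i) -> is_series f l -> Ssum f n <= l.
Proof.
  intros H Hs. apply (is_lim_seq_incr_compare (Ssum f)); [apply series_Ssum, Hs|].
  intro k; simpl; specialize (H k); lra.
Qed.

Lemma finite_series (a : nat -> R) N : (forall i, (N <= i)%nat -> a i = 0) ->
  is_series a (Ssum a N).
Proof.
  intro H. apply Ssum_series.
  apply is_lim_seq_ext_loc with (fun _ => Ssum a N); [|apply is_lim_seq_const].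
  exists N. intros n Hn. replace n with (N + (n - N))%nat by lia.
  generalize (n - N)%nat. intro k; induction k. rewrite Nat.add_0_r; auto.
  rewrite Nat.add_succ_r; simpl. rewrite H by lia. lra.
Qed.

Lemma ex_plus (a b : nat -> R) : ex_series a -> ex_series b -> ex_series (fun n => a n + b n).
Proof. intros Ha Hb. exact (ex_series_plus a b Ha Hb). Qed.

Lemma ex_scal (c : R) (a : nat -> R) : ex_series a -> ex_series (fun n => c * a n).
Proof. intros Ha. exact (ex_series_scal_l c a Ha). Qed.

Lemma Series_le_gen (a b : nat -> R) : (forall n, a n <= b n) -> ex_series a -> ex_series b ->
  Series a <= Series b.
Proof.
  intros H Ha Hb. pose proof (is_lim_seq_le _ _ _ _ (fun n => Ssum_le a b n H) (ex_Ssum a Ha) (ex_Ssum b Hb)).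
  simpl in H0. exact H0.
Qed.

Definition E (r f : nat -> R) : R := Series (fun i => r i * f i).
Definition Gf (r : nat -> R) (k : nat) : R := Ssum r k + r k / 2.
Definition dirac (k : nat) : nat -> R := fun i => if Nat.eqb i k then 1 else 0.
Definition mix (a : R) (r1 r2 : nat -> R) : nat -> R := fun i => a * r1 i + (1 - a) * r2 i.

Lemma strat_Ssum_le1 r n : is_strategy r -> Ssum r n <= 1.
Proof. intros [H0 [H1 H2]]. apply Ssum_le_lim; auto. Qed.

Lemma strat_le1 r k : is_strategy r -> r k <= 1.
Proof.
  intro H. pose proof (strat_Ssum_le1 r (S k) H). simpl in H0.
  pose proof (Ssum_nonneg r k (proj1 H)). lra.
Qed.

Lemma Gf_bounds r k : is_strategy r -> 0 <= Gf r k <= 1.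
Proof.
  intro H. unfold Gf. pose proof (strat_Ssum_le1 r (S k) H). simpl in H0.
  pose proof (Ssum_nonneg r k (proj1 H)). pose proof (proj1 H k). lra.
Qed.

Lemma ex_E r f C D : is_strategy r -> (forall i, Rabs (f i) <= C + D * INR i) ->
  ex_series (fun i => r i * f i).
Proof.
  intros Hr Hf. destruct Hr as [H0 [H1 H2]].
  apply (@ex_series_le R_AbsRing R_CompleteNormedModule _ (fun i => C * r i + D * (INR i * r i))).
  - intro n. change (norm (r n * f n)) with (Rabs (r n * f n)).
    rewrite Rabs_mult, (Rabs_right (r n)) by (apply Rle_ge, H0).
    specialize (Hf n). specialize (H0 n). nra.
  - apply ex_plus; apply ex_scal; auto. exists 1; auto.
Qed.

Lemma E_plus r f g : ex_series (fun i => r i * f i) -> ex_series (fun i => r i * g i) ->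
  E r (fun i => f i + g i) = E r f + E r g.
Proof.
  intros Hf Hg. unfold E. rewrite <- Series_plus by auto. apply Series_ext; intro; ring.
Qed.

Lemma E_scal r c f : E r (fun i => c * f i) = c * E r f.
Proof. unfold E. rewrite <- Series_scal_l. apply Series_ext; intro; ring. Qed.

Lemma E_le r f g : (forall i, 0 <= r i) -> (forall i, f i <= g i) ->
  ex_series (fun i => r i * f i) -> ex_series (fun i => r i * g i) -> E r f <= E r g.
Proof.
  intros H0 H Hf Hg. apply Series_le_gen; auto. intro n.
  apply Rmult_le_compat_l; auto.
Qed.

Lemma E_mix a r1 r2 f : ex_series (fun i => r1 i * f i) -> ex_series (fun i => r2 i * f i) ->
  E (mix a r1 r2) f = a * E r1 f + (1 - a) * E r2 f.
Proof.
  intros H1 H2. unfold E, mix.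
  rewrite <- !Series_scal_l, <- Series_plus.
  - apply Series_ext; intro; ring.
  - apply ex_scal; auto.
  - apply ex_scal; auto.
Qed.

Lemma mean_E r : mean r = E r INR.
Proof. unfold mean, E. apply Series_ext; intro; ring. Qed.

Lemma Ssum_dirac k f n : Ssum (fun i => dirac k i * f i) n = if (k <? n)%nat then f k else 0.
Proof.
  induction n; simpl. auto. rewrite IHn. unfold dirac.
  destruct (Nat.eqb_spec n k); destruct (Nat.ltb_spec k n); destruct (Nat.ltb_spec k (S n));
   try lia; subst; ring.
Qed.

Lemma E_dirac k f : E (dirac k) f = f k.
Proof.
  unfold E. apply is_series_unique.
  replace (f k) with (Ssum (fun i => dirac k i * f i) (S k)).
  - apply finite_series. intros i Hi. unfold dirac.
    destruct (Nat.eqb_spec i k); [lia|ring].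
  - rewrite Ssum_dirac. destruct (Nat.ltb_spec k (S k)); [auto|lia].
Qed.

Lemma dirac_strategy k : is_strategy (dirac k).
Proof.
  split; [|split].
  - intro i; unfold dirac; destruct (Nat.eqb i k); lra.
  - replace 1 with (Ssum (fun i => dirac k i * 1) (S k)).
    + eapply is_series_ext; [|apply finite_series]. intro; simpl; ring.
      intros i Hi. unfold dirac. destruct (Nat.eqb_spec i k); [lia|ring].
    + rewrite Ssum_dirac. destruct (Nat.ltb_spec k (S k)); [auto|lia].
  - exists (INR k).
    replace (INR k) with (Ssum (fun i => INR i * dirac k i) (S k)).
    + apply finite_series. intros i Hi. unfold dirac. destruct (Nat.eqb_spec i k); [lia|ring].
    + rewrite (Ssum_ext _ (fun i => dirac k i * INR i)) by (intro; ring).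
      rewrite Ssum_dirac. destruct (Nat.ltb_spec k (S k)); [auto|lia].
Qed.

Lemma mix_strategy a r1 r2 : 0 <= a <= 1 -> is_strategy r1 -> is_strategy r2 ->
  is_strategy (mix a r1 r2).
Proof.
  intros Ha [A0 [A1 A2]] [B0 [B1 B2]]. unfold mix. split; [|split].
  - intro i. specialize (A0 i); specialize (B0 i). nra.
  - apply Ssum_series.
    apply series_Ssum in A1. apply series_Ssum in B1.
    replace 1 with (a * 1 + (1 - a) * 1) by ring.
    eapply is_lim_seq_ext; [|apply is_lim_seq_plus';
       [apply (is_lim_seq_mult' _ _ _ _ (is_lim_seq_const a) A1)
       |apply (is_lim_seq_mult' _ _ _ _ (is_lim_seq_const (1-a)) B1)]].
    intro n; simpl. rewrite Ssum_plus, !Ssum_scal. ring.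
  - eapply ex_series_ext; [|apply (ex_plus _ _ (ex_scal a _ A2) (ex_scal (1-a) _ B2))].
    intro; simpl; ring.
Qed.

Lemma Ssum_ext_lt f g n : (forall i, (i < n)%nat -> f i = g i) -> Ssum f n = Ssum g n.
Proof. intro H; induction n; simpl; auto. rewrite IHn, H; auto. Qed.

Lemma Pr_gt_E p q : Pr_gt p q = E p (Ssum q).
Proof.
  unfold Pr_gt, E. apply Series_ext. intro i. f_equal.
  apply is_series_unique.
  replace (Ssum q i) with (Ssum (fun j => if (j <? i)%nat then q j else 0) i).
  - apply finite_series. intros j Hj. destruct (Nat.ltb_spec j i); [lia|auto].
  - apply Ssum_ext_lt. intros j Hj. destruct (Nat.ltb_spec j i); [auto|lia].
Qed.

Lemma ex_Ssum_E p q : is_strategy p -> is_strategy q -> ex_series (fun i => p i * Ssum q i).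
Proof.
  intros Hp Hq. apply (ex_E _ _ 1 0 Hp). intro i.
  rewrite Rabs_right by (apply Rle_ge, Ssum_nonneg, (proj1 Hq)).
  pose proof (strat_Ssum_le1 q i Hq). lra.
Qed.

Lemma ex_pq p q : is_strategy p -> is_strategy q -> ex_series (fun i => p i * q i).
Proof.
  intros Hp Hq. apply (ex_E _ _ 1 0 Hp). intro i.
  rewrite Rabs_right by (apply Rle_ge, (proj1 Hq)).
  pose proof (strat_le1 q i Hq). lra.
Qed.

Lemma ex_G p q : is_strategy p -> is_strategy q -> ex_series (fun i => p i * Gf q i).
Proof.
  intros Hp Hq. apply (ex_E _ _ 1 0 Hp). intro i.
  pose proof (Gf_bounds q i Hq). rewrite Rabs_right by lra. lra.
Qed.

Lemma ex_INR p : is_strategy p -> ex_series (fun i => p i * INR i).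
Proof.
  intros Hp. apply (ex_E _ _ 0 1 Hp). intro i.
  rewrite Rabs_right by (apply Rle_ge, pos_INR). lra.
Qed.

Lemma L3 p q : is_strategy p -> is_strategy q ->
  E p (Ssum q) + E q (Ssum p) + E p q = 1.
Proof.
  intros Hp Hq.
  pose proof (ex_Ssum _ (ex_Ssum_E p q Hp Hq)) as HA.
  pose proof (ex_Ssum _ (ex_Ssum_E q p Hq Hp)) as HB.
  pose proof (ex_Ssum _ (ex_pq p q Hp Hq)) as HC.
  pose proof (is_lim_seq_plus' _ _ _ _ (is_lim_seq_plus' _ _ _ _ HA HB) HC) as H.
  pose proof (is_lim_seq_mult' _ _ _ _ (series_Ssum _ _ (proj1 (proj2 Hp))) (series_Ssum _ _ (proj1 (proj2 Hq)))) as H2.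
  unfold E. apply (lim_uniq _ _ _ H). eapply is_lim_seq_ext; [|replace 1 with (1*1) by ring; exact H2].
  intro n; simpl. induction n; simpl. ring. nra.
Qed.

Lemma E_G_split p q : is_strategy p -> is_strategy q -> E p (Gf q) = E p (Ssum q) + E p q / 2.
Proof.
  intros Hp Hq. unfold Gf. rewrite E_plus.
  - f_equal. unfold E. rewrite (Series_ext _ (fun i => /2 * (p i * q i))) by (intro; field).
    rewrite Series_scal_l. field.
  - apply ex_Ssum_E; auto.
  - eapply ex_series_ext; [|apply (ex_scal (/2) _ (ex_pq p q Hp Hq))]. intro; simpl; field.
Qed.

Lemma E_comm p q : E p q = E q p.
Proof. unfold E; apply Series_ext; intro; ring. Qed.

Lemma L3G p q : is_strategy p -> is_strategy q -> E p (Gf q) + E q (Gf p) = 1.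
Proof.
  intros Hp Hq. rewrite !E_G_split by auto. rewrite (E_comm q p).
  pose proof (L3 p q Hp Hq). lra.
Qed.

Lemma P1_E v1 p q : is_strategy p -> is_strategy q -> P1 v1 p q = v1 * E p (Gf q) - E p INR.
Proof.
  intros Hp Hq. unfold P1. rewrite Pr_gt_E, E_G_split, <- mean_E by auto.
  unfold Pr_eq. fold (E p q). field.
Qed.

Lemma P2_E v2 q p : is_strategy p -> is_strategy q -> P2 v2 q p = v2 * E q (Gf p) - E q INR.
Proof.
  intros Hp Hq. unfold P2. rewrite Pr_gt_E, E_G_split, <- mean_E by auto.
  unfold Pr_eq. fold (E p q). rewrite (E_comm p q). field.
Qed.

Lemma H_E p q : is_strategy p -> is_strategy q -> H p q = 2 * E p (Gf q) - 1.
Proof.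
  intros Hp Hq. unfold H. rewrite !Pr_gt_E, E_G_split by auto.
  pose proof (L3 p q Hp Hq). lra.
Qed.

Lemma Ssum_S f n : Ssum f (S n) = Ssum f n + f n.
Proof. reflexivity. Qed.

Lemma Gf_alt r k : Gf r k = (Ssum r k + Ssum r (S k)) / 2.
Proof. unfold Gf; simpl; field. Qed.

Section U.
Variable m : nat.
Hypothesis Hm : (1 <= m)%nat.
Let U := uniform_odd m.

Lemma INRm_pos : 0 < INR m.
Proof. apply lt_0_INR; lia. Qed.

Lemma U_even n : U (2 * n)%nat = 0.
Proof. unfold U, uniform_odd. rewrite Nat.odd_even. reflexivity. Qed.

Lemma U_odd n : U (2 * n + 1)%nat = if (n <? m)%nat then / INR m else 0.
Proof.
  unfold U, uniform_odd. rewrite Nat.odd_odd, Bool.andb_true_l.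
  destruct (Nat.ltb_spec n m); destruct (Nat.ltb_spec (2*n+1) (2*m)); auto; lia.
Qed.

Lemma U_Ssum n : INR m * Ssum U (2 * n) = INR (Nat.min n m) /\
                 INR m * Ssum U (2 * n + 1) = INR (Nat.min n m).
Proof.
  pose proof INRm_pos.
  induction n.
  - rewrite Nat.min_0_l. unfold U, uniform_odd. simpl. split; ring.
  - destruct IHn as [H1 H2].
    assert (E1 : INR m * Ssum U (2 * S n) = INR (Nat.min (S n) m)).
    { replace (2 * S n)%nat with (S (2 * n + 1)) by lia. rewrite !Ssum_S.
      rewrite Rmult_plus_distr_l, H2, U_odd.
      destruct (Nat.ltb_spec n m).
      - rewrite Nat.min_l, Nat.min_l by lia. rewrite S_INR. field. lra.
      - rewrite Nat.min_r, Nat.min_r by lia. ring. }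
    split; auto.
    replace (2 * S n + 1)%nat with (S (2 * S n)) by lia. rewrite !Ssum_S.
    rewrite Rmult_plus_distr_l, E1, U_even. ring.
Qed.

Lemma U_SsumI n : INR m * Ssum (fun i => U i * INR i) (2 * n) = INR (Nat.min n m) ^ 2.
Proof.
  pose proof INRm_pos.
  induction n.
  - rewrite Nat.min_0_l. simpl. ring.
  - replace (2 * S n)%nat with (S (S (2 * n))) by lia. rewrite !Ssum_S.
    rewrite !Rmult_plus_distr_l, IHn.
    replace (S (2 * n)) with (2 * n + 1)%nat by lia.
    rewrite U_even, U_odd. destruct (Nat.ltb_spec n m).
    + rewrite Nat.min_l, Nat.min_l by lia. rewrite plus_INR, mult_INR, S_INR. change (INR 2) with (1+1). change (INR 1) with 1. try rewrite (S_INR n). field. lra.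
    + rewrite Nat.min_r, Nat.min_r by lia. ring.
Qed.

Lemma U_zero i : (2 * m <= i)%nat -> U i = 0.
Proof.
  intro Hi. unfold U, uniform_odd. destruct (Nat.ltb_spec i (2*m)); [lia|].
  rewrite Bool.andb_false_r. auto.
Qed.

Lemma U_strategy : is_strategy U /\ mean U = INR m.
Proof.
  pose proof INRm_pos.
  assert (H0 : forall i, 0 <= U i).
  { intro i. unfold U, uniform_odd. destruct (_ && _)%bool. left; apply Rinv_0_lt_compat; auto. lra. }
  assert (Hs : is_series U 1).
  { replace 1 with (Ssum U (2 * m)).
    - apply finite_series. apply U_zero.
    - destruct (U_Ssum m) as [A _]. rewrite Nat.min_id in A.
      apply (Rmult_eq_reg_l (INR m)); [|lra]. rewrite A. ring. }
  assert (Hm' : is_series (fun n => INR n * U n) (INR m)).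
  { replace (INR m) with (Ssum (fun i => U i * INR i) (2 * m)).
    - eapply is_series_ext; [|apply finite_series].
      + intro; simpl; ring.
      + intros i Hi. rewrite U_zero by auto. ring.
    - pose proof (U_SsumI m) as A. rewrite Nat.min_id in A.
      apply (Rmult_eq_reg_l (INR m)); [|lra]. rewrite A. ring. }
  split. split; [|split]; auto. exists (INR m); auto.
  unfold mean. apply is_series_unique; auto.
Qed.

Lemma U_G k : 2 * INR m * Gf U k <= INR k.
Proof.
  pose proof INRm_pos. rewrite Gf_alt.
  rewrite (Nat.div2_odd k). destruct (Nat.odd k); simpl Nat.b2n.
  - set (n := Nat.div2 k). replace (S (2 * n + 1)) with (2 * S n)%nat by lia.
    destruct (U_Ssum n) as [_ A]. destruct (U_Ssum (S n)) as [B _].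
    replace (2 * INR m * ((Ssum U (2 * n + 1) + Ssum U (2 * S n)) / 2))
      with (INR m * Ssum U (2 * n + 1) + INR m * Ssum U (2 * S n)) by field.
    rewrite A, B, plus_INR, mult_INR. change (INR 2) with (1+1). change (INR 1) with 1.
    destruct (Nat.le_gt_cases n m).
    + rewrite (Nat.min_l n) by lia. destruct (Nat.le_gt_cases (S n) m).
      * rewrite Nat.min_l by lia. rewrite S_INR. lra.
      * rewrite Nat.min_r by lia. assert (n = m) by lia. subst. lra.
    + rewrite !Nat.min_r by lia. apply lt_INR in H0. lra.
  - set (n := Nat.div2 k). rewrite Nat.add_0_r.
    replace (S (2 * n)) with (2 * n + 1)%nat by lia.
    destruct (U_Ssum n) as [B A].
    replace (2 * INR m * ((Ssum U (2 * n) + Ssum U (2 * n + 1)) / 2))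
      with (INR m * Ssum U (2 * n) + INR m * Ssum U (2 * n + 1)) by field.
    rewrite A, B, mult_INR. change (INR 2) with (1+1).
    destruct (Nat.le_gt_cases n m).
    + rewrite Nat.min_l by lia. lra.
    + rewrite Nat.min_r by lia. apply lt_INR in H0. lra.
Qed.

End U.

Lemma comb (m : nat) (s : nat -> R) : (1 <= m)%nat ->
  (forall j, 0 <= s j) ->
  (forall j, Ssum s j + Ssum s (S j) <= INR j) ->
  (forall j, 0 < s j -> Ssum s j + Ssum s (S j) = INR j) ->
  (forall N0 c, (forall N, (N0 <= N)%nat -> Ssum s N = c) -> c = INR m) ->
  forall n, (n <= m)%nat -> Ssum s (2 * n) = INR n.
Proof.
  intros Hm H0 Hle Heq Hlim. induction n; intro Hn.
  - simpl. auto.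
  - specialize (IHn ltac:(lia)).
    assert (E1 : Ssum s (S (2 * n)) = Ssum s (2 * n) + s (2 * n)%nat) by reflexivity.
    assert (Hs0 : s (2 * n)%nat = 0).
    { pose proof (Hle (2 * n)%nat). pose proof (H0 (2 * n)%nat).
      rewrite mult_INR in H. change (INR 2) with (1+1) in H. lra. }
    assert (E2 : Ssum s (S (2 * n)) = INR n) by lra.
    replace (2 * S n)%nat with (S (S (2 * n))) by lia.
    assert (E3 : Ssum s (S (S (2 * n))) = Ssum s (S (2 * n)) + s (S (2 * n))) by reflexivity.
    assert (I1 : INR (S (2 * n)) = 2 * INR n + 1).
    { rewrite S_INR, mult_INR. change (INR 2) with (1+1). ring. }
    destruct (Rlt_or_le 0 (s (S (2 * n)))) as [Hp | Hp].
    + pose proof (Heq _ Hp). rewrite S_INR. lra.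
    + exfalso. assert (Hz : s (S (2 * n)) = 0) by (pose proof (H0 (S (2 * n))); lra).
      assert (Hd : forall d, Ssum s (S (S (2 * n)) + d) = INR n).
      { induction d.
        - rewrite Nat.add_0_r. lra.
        - rewrite Nat.add_succ_r.
          set (j := (S (S (2 * n)) + d)%nat) in *.
          assert (Ij : INR j >= 2 * INR n + 2).
          { unfold j. rewrite plus_INR, !S_INR, mult_INR. change (INR 2) with (1+1).
            pose proof (pos_INR d). lra. }
          assert (Ej : Ssum s (S j) = Ssum s j + s j) by reflexivity.
          destruct (Rlt_or_le 0 (s j)) as [Hq | Hq].
          + pose proof (Heq _ Hq). pose proof (Hle (S j)).
            assert (Ssum s (S (S j)) = Ssum s (S j) + s (S j)) by reflexivity.
            pose proof (H0 (S j)). rewrite S_INR in H1. lra.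
          + pose proof (H0 j). lra. }
      assert (INR n = INR m).
      { apply (Hlim (S (S (2 * n))) (INR n)). intros N HN.
        replace N with (S (S (2 * n)) + (N - S (S (2 * n))))%nat by lia. apply Hd. }
      apply INR_eq in H. lia.
Qed.

Theorem lemma1 (v1 v2 : R) (m : nat) (b : R) (p q : nat -> R) :
  v1 >= v2 -> v2 > 0 -> (1 <= m)%nat -> 0 < b -> b < INR m ->
  mean p = INR m -> mean q = b ->
  allpay_NE v1 v2 p q ->
  INR m = v2 / 2 /\ lotto_NE (INR m) b p q /\ p = uniform_odd m.
Proof.
  intros Hv Hv2 Hm Hb Hbm Hmp Hmq [Hp [Hq [N1 N2]]].
  pose proof (INRm_pos m Hm) as Hmpos.
  rewrite mean_E in Hmp, Hmq.
  assert (D1 : forall p', is_strategy p' -> E p' INR = INR m -> E p' (Gf q) <= E p (Gf q)).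
  { intros p' Hp' Hm'. specialize (N1 p' Hp'). rewrite !P1_E in N1 by auto.
    rewrite Hm', Hmp in N1. apply (Rmult_le_reg_l v1); lra. }
  assert (D2 : forall q', is_strategy q' -> E q' INR = b -> E q' (Gf p) <= E q (Gf p)).
  { intros q' Hq' Hm'. specialize (N2 q' Hq'). rewrite !P2_E in N2 by auto.
    rewrite Hm', Hmq in N2. apply (Rmult_le_reg_l v2); lra. }
  assert (Hlotto : lotto_NE (INR m) b p q).
  { split; [split; [auto|rewrite mean_E; auto]|split; [split; [auto|rewrite mean_E; auto]|split]].
    - intros p' [Hp' Hm']. rewrite mean_E in Hm'. rewrite !H_E by auto.
      specialize (D1 p' Hp' Hm'). lra.
    - intros q' [Hq' Hm']. rewrite mean_E in Hm'. rewrite !H_E by auto.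
      specialize (D2 q' Hq' Hm'). lra. }
  destruct (U_strategy m Hm) as [HU HmU]. rewrite mean_E in HmU.
  assert (K : 2 * INR m * E q (Gf p) <= b).
  { pose proof (D1 _ HU HmU).
    pose proof (L3G _ _ HU Hq). pose proof (L3G _ _ Hp Hq).
    assert (E q (Gf (uniform_odd m)) <= E q (fun k => / (2 * INR m) * INR k)).
    { apply E_le; [apply (proj1 Hq)| |apply ex_G; auto|].
      - intro k. pose proof (U_G m Hm k).
        apply (Rmult_le_reg_l (2 * INR m)); [lra|]. field_simplify; lra.
      - apply (ex_E _ _ 0 (/ (2 * INR m)) Hq). intro i.
        rewrite Rabs_right. lra. apply Rle_ge, Rmult_le_pos. left; apply Rinv_0_lt_compat; lra.
        apply pos_INR. }
    rewrite E_scal, Hmq in H2.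
    assert (E q (Gf p) <= / (2 * INR m) * b) by lra.
    apply (Rmult_le_compat_l (2 * INR m)) in H3; [|lra].
    rewrite <- Rmult_assoc, Rinv_r in H3 by lra. lra. }
  assert (Hpp : E p (Gf p) = 1/2) by (pose proof (L3G p p Hp Hp); lra).
  assert (PB : forall k, 2 * INR m * Gf p k <= INR k).
  { intro k. destruct (Rlt_or_le (INR k) b) as [Hk | Hk].
    - set (a := (INR m - b) / (INR m - INR k)).
      assert (Ha : 0 < a <= 1).
      { unfold a. pose proof (pos_INR k). split.
        - apply Rdiv_lt_0_compat; lra.
        - apply (Rmult_le_reg_r (INR m - INR k)); [lra|]. field_simplify; lra. }
      assert (Hs : is_strategy (mix a (dirac k) p)) by (apply mix_strategy; auto; [lra| apply dirac_strategy]).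
      assert (Hme : E (mix a (dirac k) p) INR = b).
      { rewrite E_mix, E_dirac, Hmp by (try apply ex_INR; auto; apply dirac_strategy).
        unfold a. field. lra. }
      pose proof (D2 _ Hs Hme).
      rewrite E_mix, E_dirac, Hpp in H by (try apply ex_G; auto; apply dirac_strategy).
      assert (a * (2 * INR m * Gf p k) <= a * INR k).
      { assert (b = a * INR k + (1 - a) * INR m) by (unfold a; field; apply Rgt_not_eq; lra).
        nra. }
      apply Rmult_le_reg_l in H0; lra.
    - assert (Hk0 : 0 < INR k) by lra.
      set (a := 1 - b / INR k).
      assert (Ha : 0 <= a < 1).
      { unfold a. split.
        - assert (b / INR k <= 1). { apply (Rmult_le_reg_r (INR k)); [lra|]. field_simplify; lra. } lra.
        - assert (0 < b / INR k) by (apply Rdiv_lt_0_compat; lra). lra. }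
      assert (Hs : is_strategy (mix a (dirac 0) (dirac k))) by (apply mix_strategy; auto; [lra| apply dirac_strategy|apply dirac_strategy]).
      assert (Hme : E (mix a (dirac 0) (dirac k)) INR = b).
      { rewrite E_mix, !E_dirac by (apply ex_INR; apply dirac_strategy).
        unfold a. simpl. field. apply Rgt_not_eq; lra. }
      pose proof (D2 _ Hs Hme).
      rewrite E_mix, !E_dirac in H by (apply ex_G; auto; apply dirac_strategy).
      assert (0 <= Gf p 0) by (apply Gf_bounds; auto).
      assert ((1 - a) * (2 * INR m * Gf p k) <= (1 - a) * INR k).
      { assert (b = (1 - a) * INR k) by (unfold a; field; apply Rgt_not_eq; lra).
        assert (H3 := Rmult_le_compat_l (2*INR m) _ _ ltac:(lra) H).
        assert (0 <= 2*INR m * (a * Gf p 0)) by (apply Rmult_le_pos; [lra|apply Rmult_le_pos; lra]).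
        ring_simplify in H1. ring_simplify in H3. ring_simplify. ring_simplify in H2. lra. }
      apply Rmult_le_reg_l in H1; lra. }
  assert (EQ : forall j, p j * (INR j - 2 * INR m * Gf p j) = 0).
  { set (f := fun j => p j * (INR j - 2 * INR m * Gf p j)).
    assert (Hex : ex_series f).
    { unfold f. eapply ex_series_ext; [|apply (ex_plus _ _ (ex_INR p Hp) (ex_scal (- (2 * INR m)) _ (ex_G p p Hp Hp)))].
      intro; simpl; ring. }
    assert (Hf0 : Series f = 0).
    { unfold f. rewrite (Series_ext _ (fun j => p j * INR j + (- (2 * INR m)) * (p j * Gf p j))) by (intro; ring).
      rewrite Series_plus, Series_scal_l.
      - fold (E p INR). fold (E p (Gf p)). rewrite Hmp, Hpp. field.
      - apply ex_INR; auto.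
      - apply ex_scal, ex_G; auto. }
    assert (Hnn : forall j, 0 <= f j).
    { intro j. unfold f. apply Rmult_le_pos. apply (proj1 Hp). pose proof (PB j); lra. }
    intro j. fold (f j).
    pose proof (Ssum_le_lim f 0 (S j) Hnn ltac:(rewrite <- Hf0; apply Series_correct, Hex)).
    simpl in H. pose proof (Ssum_nonneg f j Hnn). pose proof (Hnn j). lra. }
  set (s := fun j => INR m * p j).
  assert (Ss : forall n, Ssum s n = INR m * Ssum p n) by (intro; apply Ssum_scal).
  assert (CB : forall n, (n <= m)%nat -> Ssum s (2 * n) = INR n).
  { apply comb; auto.
    - intro j. unfold s. apply Rmult_le_pos; [lra|apply (proj1 Hp)].
    - intro j. rewrite !Ss. pose proof (PB j). rewrite Gf_alt in H. lra.
    - intros j Hj. rewrite !Ss. unfold s in Hj.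
      assert (0 < p j). { apply (Rmult_lt_reg_l (INR m)); lra. }
      pose proof (EQ j). apply Rmult_integral in H0. destruct H0; [lra|].
      rewrite Gf_alt in H0. lra.
    - intros N0 c Hc.
      assert (L1 : is_lim_seq (Ssum s) (INR m)).
      { pose proof (is_lim_seq_mult' _ _ _ _ (is_lim_seq_const (INR m)) (series_Ssum _ _ (proj1 (proj2 Hp)))) as HL.
        rewrite Rmult_1_r in HL.
        eapply is_lim_seq_ext; [|exact HL]. intro n; symmetry; apply Ss. }
      apply (lim_uniq (Ssum s)); [|auto].
      apply is_lim_seq_ext_loc with (fun _ => c); [|apply is_lim_seq_const].
      exists N0. intros; symmetry; auto. }
  assert (Sodd : forall j, Ssum s (S j) = Ssum s j + s j) by reflexivity.
  assert (HLE : forall j, Ssum s j + Ssum s (S j) <= INR j).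
  { intro j. rewrite !Ss. pose proof (PB j). rewrite Gf_alt in H. lra. }
  assert (s0 : forall j, 0 <= s j).
  { intro j. unfold s. apply Rmult_le_pos; [lra|apply (proj1 Hp)]. }
  assert (PE : forall n, (n <= m)%nat -> p (2 * n)%nat = 0).
  { intros n Hn. pose proof (CB n Hn). pose proof (HLE (2*n)%nat). pose proof (Sodd (2*n)%nat) as So.
    rewrite mult_INR in H0. change (INR 2) with (1+1) in H0. pose proof (s0 (2*n)%nat).
    assert (s (2 * n)%nat = 0) by lra. unfold s in H2.
    apply Rmult_integral in H2. destruct H2; [lra|auto]. }
  assert (PO : forall n, (n < m)%nat -> p (2 * n + 1)%nat = / INR m).
  { intros n Hn. pose proof (CB n ltac:(lia)). pose proof (CB (S n) ltac:(lia)).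
    replace (2 * S n)%nat with (S (S (2 * n))) in H0 by lia.
    pose proof (Sodd (S (2 * n))) as So1. pose proof (Sodd (2 * n)%nat) as So2.
    rewrite S_INR in H0. pose proof (PE n ltac:(lia)) as Pe.
    assert (Hs1 : s (S (2 * n)) = 1).
    { assert (s (2*n)%nat = 0) by (unfold s; rewrite Pe; ring). lra. }
    unfold s in Hs1. replace (2 * n + 1)%nat with (S (2 * n)) by lia.
    apply (Rmult_eq_reg_l (INR m)); [|lra]. rewrite Rinv_r by lra. lra. }
  assert (Sm : Ssum p (2 * m) = 1).
  { pose proof (CB m (le_n _)). rewrite Ss in H.
    apply (Rmult_eq_reg_l (INR m)); [|lra]. lra. }
  assert (PZ : forall j, (2 * m <= j)%nat -> p j = 0).
  { intros j Hj. pose proof (strat_Ssum_le1 p (S j) Hp). simpl in H.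
    pose proof (Ssum_mono p (2 * m) (j - 2 * m) (proj1 Hp)).
    replace (2 * m + (j - 2 * m))%nat with j in H0 by lia.
    pose proof (proj1 Hp j). lra. }
  assert (Hunif : p = uniform_odd m).
  { apply functional_extensionality. intro j.
    rewrite (Nat.div2_odd j). set (n := Nat.div2 j).
    destruct (Nat.odd j); simpl Nat.b2n.
    - rewrite U_odd by auto. destruct (Nat.ltb_spec n m).
      + apply PO; auto.
      + apply PZ; lia.
    - rewrite Nat.add_0_r, U_even. destruct (Nat.le_gt_cases n m).
      + apply PE; auto.
      + apply PZ; lia. }
  split; [|split; auto].
  assert (G2m : Gf p (2 * m) = 1).
  { unfold Gf. rewrite Sm, (PE m (le_n _)). field. }
  assert (Pd : forall k, P2 v2 (dirac k) p = v2 * Gf p k - INR k).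
  { intro k. rewrite P2_E, !E_dirac by (auto; apply dirac_strategy). auto. }
  assert (Pq : P2 v2 q p = v2 * E q (Gf p) - b) by (rewrite P2_E, Hmq by auto; auto).
  pose proof (N2 _ (dirac_strategy (2 * m))) as A1. rewrite Pd, Pq, G2m, mult_INR in A1.
  change (INR 2) with (1+1) in A1.
  pose proof (N2 _ (dirac_strategy 0)) as A2. rewrite Pd, Pq in A2. simpl INR in A2.
  pose proof (Gf_bounds p 0 Hp) as A3.
  destruct (Rtotal_order v2 (2 * INR m)) as [Hlt | [Heq | Hgt]].
  - exfalso. assert (0 <= v2 * Gf p 0) by (apply Rmult_le_pos; lra).
    assert (v2 * E q (Gf p) >= b) by lra.
    assert (E q (Gf p) > 0) by nra. nra.
  - lra.
  - exfalso. assert (HE : 2 * INR m * (v2 * E q (Gf p)) <= v2 * b) by nra.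
    nra.
Qed.
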